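(* Let $\mathbb{F}$ be a field, $\prec$ a term order on the monomials of $\mathbb{F}[x_1,\ldots,x_n]$, $\mathcal{F}\subseteq\mathbb{F}^n$ a finite set, $h\in\mathbb{F}^n\setminus\mathcal{F}$, and $\mathcal{T}:=\mathcal{F}\cup\{h\}$. Let $\{g_1,\ldots,g_s\}$ be the reduced Gröbner basis of $I(\mathcal{F})$ with respect to $\prec$, indexed so that $m_1\prec m_2\prec\cdots\prec m_s$ where $m_j:=\mathrm{lm}_\prec(g_j)$. Let $i:=\min\{j: g_j(h)\ne 0\}$. Then $\mathrm{Sm}(\prec,\mathcal{T})=\mathrm{Sm}(\prec,\mathcal{F})\cup\{m_i\}$.
   Context: $I(\mathcal{F})$ is the ideal of polynomials vanishing on $\mathcal{F}$; $\mathrm{lm}_\prec(f)$ is the $\prec$-largest monomial of $f$ with nonzero coefficient; $\mathrm{Sm}(\prec,\mathcal{F})$ is the set of monomials that are not leading monomials of nonzero elements of $I(\mathcal{F})$. A Gröbner basis $\{g_1,\dots,g_s\}$ of an ideal $I$ is a finite subset of $I$ whose leading monomials generate the monomial ideal of all leading monomials of $I$; it is reduced if each $\mathrm{lm}(g_j)$ has coefficient 1 and no monomial of $g_j$ is divisible by $\mathrm{lm}(g_l)$ for $l\ne j$. *)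

(* Defs.v *)
From HB Require Import structures.
From mathcomp Require Import all_boot all_order all_algebra.
Set Implicit Arguments. Unset Strict Implicit. Unset Printing Implicit Defensive.
Import GRing.Theory.
Local Open Scope ring_scope.

Definition mon (n : nat) := {ffun 'I_n -> nat}.
Definition mon1 (n : nat) : mon n := [ffun _ => 0%N].
Definition monmul (n : nat) (a b : mon n) : mon n := [ffun i => (a i + b i)%N].
Definition mondiv (n : nat) (a b : mon n) : Prop := forall i, (a i <= b i)%N.

Definition point (F : fieldType) (n : nat) := {ffun 'I_n -> F}.

Record mpoly (F : fieldType) (n : nat) := MPoly {
  mcoef : mon n -> F;
  msupp : seq (mon n);
  msupp_ok : forall m, mcoef m != 0 -> m \in msupp }.

Definition monval (F : fieldType) (n : nat) (m : mon n) (x : point F n) : F :=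
  \prod_(i < n) x i ^+ m i.

Definition peval (F : fieldType) (n : nat) (p : mpoly F n) (x : point F n) : F :=
  \sum_(m <- undup (msupp p)) mcoef p m * monval m x.

Definition term_order (n : nat) (lt : mon n -> mon n -> bool) : Prop :=
  [/\ (forall a, ~~ lt a a),
      (forall a b c, lt a b -> lt b c -> lt a c),
      (forall a b, a != b -> lt a b || lt b a),
      (forall a b c, lt a b -> lt (monmul a c) (monmul b c))
    & well_founded (fun a b => lt a b)].

Definition is_lm (F : fieldType) (n : nat) (lt : mon n -> mon n -> bool)
    (p : mpoly F n) (m : mon n) : Prop :=
  mcoef p m != 0 /\ (forall m', mcoef p m' != 0 -> m' != m -> lt m' m).

Definition vanishes (F : fieldType) (n : nat) (S : seq (point F n)) (p : mpoly F n) : Prop :=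
  forall x, x \in S -> peval p x = 0.

Definition Sm (F : fieldType) (n : nat) (lt : mon n -> mon n -> bool)
    (S : seq (point F n)) (m : mon n) : Prop :=
  ~ exists p : mpoly F n, vanishes S p /\ (exists m0, mcoef p m0 != 0) /\ is_lm lt p m.

Definition reduced_groebner (F : fieldType) (n : nat) (lt : mon n -> mon n -> bool)
    (S : seq (point F n)) (s : nat) (g : 'I_s -> mpoly F n) (lms : 'I_s -> mon n) : Prop :=
  [/\ (forall j, vanishes S (g j)),
      (forall j, is_lm lt (g j) (lms j)),
      (forall f m, vanishes S f -> is_lm lt f m -> exists j, mondiv (lms j) m),
      (forall j, mcoef (g j) (lms j) = 1)
    & (forall j l m, l != j -> mcoef (g j) m != 0 -> ~ mondiv (lms l) m)].

(* Main.v *)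
Require Import Defs.
From mathcomp Require Import all_boot all_order all_algebra.
From Stdlib Require Import Classical.
Set Implicit Arguments. Unset Strict Implicit. Unset Printing Implicit Defensive.
Import GRing.Theory.
Local Open Scope ring_scope.

Lemma coef0 (F : fieldType) n (p : mpoly F n) m : m \notin msupp p -> mcoef p m = 0.
Proof. move=> H; apply/eqP; exact: (contraNT (@msupp_ok _ _ p m) H). Qed.

Lemma pcomb_ok (F : fieldType) n (a : F) (p : mpoly F n) (b : F) (q : mpoly F n) m :
  a * mcoef p m + b * mcoef q m != 0 -> m \in msupp p ++ msupp q.
Proof.
rewrite mem_cat; apply: contraR; rewrite negb_or => /andP[Hp Hq].
by rewrite (coef0 Hp) (coef0 Hq) !mulr0 addr0.
Qed.

Definition pcomb (F : fieldType) n (a : F) (p : mpoly F n) (b : F) (q : mpoly F n) :=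
  @MPoly F n (fun m => a * mcoef p m + b * mcoef q m) (msupp p ++ msupp q) (@pcomb_ok F n a p b q).

Definition mdiff n (u m : mon n) : mon n := [ffun k => (m k - u k)%N].

Definition sh_coef (F : fieldType) n (u : mon n) (p : mpoly F n) (m : mon n) : F :=
  if [forall k, (u k <= m k)%N] then mcoef p (mdiff u m) else 0.

Lemma monmulC n (a b : mon n) : monmul a b = monmul b a.
Proof. by apply/ffunP => k; rewrite !ffunE addnC. Qed.
Lemma monmul1 n (a : mon n) : monmul (mon1 n) a = a.
Proof. by apply/ffunP => k; rewrite !ffunE. Qed.
Lemma mdiffK n (u m : mon n) : (forall k, (u k <= m k)%N) -> monmul u (mdiff u m) = m.
Proof. by move=> H; apply/ffunP => k; rewrite !ffunE subnKC. Qed.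
Lemma mdiff_mul n (u m : mon n) : mdiff u (monmul u m) = m.
Proof. by apply/ffunP => k; rewrite !ffunE addKn. Qed.
Lemma monval_mul (F : fieldType) n (a b : mon n) (x : point F n) :
  monval (monmul a b) x = monval a x * monval b x.
Proof. by rewrite /monval -big_split; apply: eq_bigr => k _; rewrite ffunE exprD. Qed.

Lemma shift_ok (F : fieldType) n (u : mon n) (p : mpoly F n) m :
  sh_coef u p m != 0 -> m \in map (monmul u) (msupp p).
Proof.
rewrite /sh_coef; case: forallP => [H /msupp_ok Hm|]; last by rewrite eqxx.
by apply/mapP; exists (mdiff u m) => //; rewrite mdiffK.
Qed.

Definition pshift (F : fieldType) n (u : mon n) (p : mpoly F n) :=
  @MPoly F n (sh_coef u p) (map (monmul u) (msupp p)) (@shift_ok F n u p).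

Lemma sh_coef_mul (F : fieldType) n (u : mon n) (p : mpoly F n) m :
  sh_coef u p (monmul u m) = mcoef p m.
Proof.
rewrite /sh_coef mdiff_mul; case: forallP => // [[]] k.
by rewrite ffunE leq_addr.
Qed.

Lemma peval_seq (F : fieldType) n (p : mpoly F n) (L : seq (mon n)) x :
  uniq L -> {subset msupp p <= L} ->
  peval p x = \sum_(m <- L) mcoef p m * monval m x.
Proof.
move=> uL sL; rewrite (bigID (mem (msupp p))) /= [X in _ + X]big1 ?addr0; last first.
  by move=> m /coef0 ->; rewrite mul0r.
rewrite -big_filter; apply: perm_big; apply: uniq_perm.
- exact: undup_uniq.
- exact: filter_uniq.
by move=> m; rewrite mem_filter mem_undup; case: (boolP (m \in msupp p)) => // /sL ->.
Qed.

Lemma peval_comb (F : fieldType) n a (p : mpoly F n) b q x :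
  peval (pcomb a p b q) x = a * peval p x + b * peval q x.
Proof.
have uL := undup_uniq (msupp p ++ msupp q).
rewrite (@peval_seq _ _ (pcomb a p b q) _ _ uL); last by move=> m Hm; rewrite mem_undup.
rewrite (@peval_seq _ _ p _ _ uL); last by move=> m Hm; rewrite mem_undup mem_cat Hm.
rewrite (@peval_seq _ _ q _ _ uL); last by move=> m Hm; rewrite mem_undup mem_cat Hm orbT.
by rewrite !mulr_sumr -big_split; apply: eq_bigr => m _; rewrite mulrDl !mulrA.
Qed.

Lemma peval_shift (F : fieldType) n u (p : mpoly F n) x :
  peval (pshift u p) x = monval u x * peval p x.
Proof.
have inj : injective (monmul u).
  by move=> a b E; rewrite -(mdiff_mul u a) E mdiff_mul.
have uL : uniq (map (monmul u) (undup (msupp p))) by rewrite map_inj_uniq ?undup_uniq.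
rewrite (@peval_seq _ _ (pshift u p) _ _ uL); last first.
  by move=> m /mapP[m' Hm' ->]; apply/mapP; exists m'; rewrite ?mem_undup.
rewrite big_map /peval mulr_sumr; apply: eq_bigr => m _ /=.
by rewrite sh_coef_mul monval_mul mulrCA.
Qed.

Lemma peval0 (F : fieldType) n (p : mpoly F n) x : (forall m, mcoef p m = 0) -> peval p x = 0.
Proof. by move=> H; rewrite /peval big1 // => m _; rewrite H mul0r. Qed.

Lemma one_min n (lt : mon n -> mon n -> bool) : term_order lt -> forall a, ~~ lt a (mon1 n).
Proof.
case=> irr tr _ mul wf a; elim/(well_founded_ind wf): a => a IH.
apply/negP => Ha.
have H1 : lt (monmul a a) a by have := mul a (mon1 n) a Ha; rewrite monmul1.
by have := IH _ H1; rewrite (tr _ _ _ H1 Ha).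
Qed.

Lemma div_le n (lt : mon n -> mon n -> bool) : term_order lt ->
  forall a b : mon n, (forall k, (a k <= b k)%N) -> b = a \/ lt a b.
Proof.
move=> Hto a b Hab; have Hb : b = monmul (mdiff a b) a by rewrite monmulC mdiffK.
case: (eqVneq (mdiff a b) (mon1 n)) => [Hu|Hu]; first by left; rewrite Hb Hu monmul1.
right; case: Hto (one_min Hto) => irr tr tot mul wf om.
have : lt (mon1 n) (mdiff a b).
  by have := tot _ _ Hu; rewrite (negbTE (om _)).
by move/(mul _ _ a); rewrite monmul1 -Hb.
Qed.

Lemma exists_max n (lt : mon n -> mon n -> bool) : term_order lt ->
  forall L : seq (mon n), L != [::] ->
  exists2 m, m \in L & forall m', m' \in L -> m' != m -> lt m' m.
Proof.
case=> irr tr tot _ _; elim=> // a L IH _.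
case: (eqVneq L [::]) => [->|/IH [m Hm Hmax]].
  by exists a; rewrite ?mem_head // => m'; rewrite inE => /eqP ->; rewrite eqxx.
case: (eqVneq a m) => [Eam|Nam].
  exists m; first by rewrite inE Hm orbT.
  by move=> m'; rewrite inE => /orP[/eqP ->|]; [rewrite Eam eqxx | exact: Hmax].
have [Ham|Hma] := orP (tot _ _ Nam).
  exists m; first by rewrite inE Hm orbT.
  by move=> m'; rewrite inE => /orP[/eqP -> _|]; [ | exact: Hmax].
exists a; first exact: mem_head.
move=> m'; rewrite inE => /orP[/eqP ->|H]; first by rewrite eqxx.
case: (eqVneq m' m) => [-> _ //|Hne _]; exact: tr (Hmax _ H Hne) Hma.
Qed.

Lemma lm_exists (F : fieldType) n (lt : mon n -> mon n -> bool) (p : mpoly F n) :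
  term_order lt -> (exists m0, mcoef p m0 != 0) -> exists m, is_lm lt p m.
Proof.
move=> Hto [m0 H0].
have Hin : m0 \in [seq m <- msupp p | mcoef p m != 0] by rewrite mem_filter H0 msupp_ok.
have [|m Hm Hmax] := exists_max Hto (L := [seq m <- msupp p | mcoef p m != 0]).
  by case: [seq m <- msupp p | mcoef p m != 0] Hin.
move: Hm; rewrite mem_filter => /andP[Hm _]; exists m; split => // m' Hm'.
by apply: Hmax; rewrite mem_filter Hm' msupp_ok.
Qed.

Lemma shift_lm (F : fieldType) n (lt : mon n -> mon n -> bool) (p : mpoly F n) a u m' :
  term_order lt -> is_lm lt p a -> sh_coef u p m' != 0 -> m' != monmul u a ->
  lt m' (monmul u a).
Proof.
case=> _ _ _ mul _ [_ Hlm]; rewrite /sh_coef; case: forallP => [H|]; last by rewrite eqxx.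
rewrite -{2 3}(mdiffK H) => Hnz Hne.
have Hne' : mdiff u m' != a by apply: contra Hne => /eqP ->.
by rewrite monmulC [monmul u a]monmulC; apply: mul; apply: Hlm.
Qed.

Lemma ord_le n (lt : mon n -> mon n -> bool) s (lms : 'I_s -> mon n) :
  (forall j k : 'I_s, (j < k)%N -> lt (lms j) (lms k)) ->
  forall i j : 'I_s, (i <= j)%N -> lms i = lms j \/ lt (lms i) (lms j).
Proof.
move=> Hord i j; rewrite leq_eqVlt => /orP[/eqP E|H]; last by right; exact: Hord.
by left; congr lms; exact: val_inj.
Qed.

Lemma key (F : fieldType) (n : nat) (lt : mon n -> mon n -> bool)
    (S : seq (point F n)) (h : point F n)
    (s : nat) (g : 'I_s -> mpoly F n) (lms : 'I_s -> mon n) (i : 'I_s) :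
  term_order lt ->
  reduced_groebner lt S g lms ->
  (forall j k : 'I_s, (j < k)%N -> lt (lms j) (lms k)) ->
  (forall j : 'I_s, (j < i)%N -> peval (g j) h = 0) ->
  forall f, vanishes S f -> (forall m', mcoef f m' != 0 -> lt m' (lms i)) -> peval f h = 0.
Proof.
move=> Hto Hgb Hord Hlow.
have Hto' := Hto; case: Hto' => irr tr tot mul wf.
case: Hgb => Hgv Hglm Hgdiv Hg1 _.
suff: forall M, (M = lms i \/ lt M (lms i)) -> forall f, vanishes S f ->
   (forall m', mcoef f m' != 0 -> lt m' M) -> peval f h = 0.
  by move=> H f; apply: H; left.
elim/(well_founded_ind wf) => M IH HM f Hf Hlt.
case: (classic (exists m0, mcoef f m0 != 0)) => [Hex|Hno]; last first.
  apply: peval0 => m; apply/eqP; apply/negPn/negP => H; apply: Hno; by exists m.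
have [m Hm] := lm_exists Hto Hex.
have HmM : lt m M := Hlt m Hm.1.
have Hmi : lt m (lms i) by case: HM => [<-|]; [done | exact: tr].
have [j Hj] := Hgdiv f m Hf Hm.
have Hum : monmul (mdiff (lms j) m) (lms j) = m by rewrite monmulC mdiffK.
have Hji : (j < i)%N.
  rewrite ltnNge; apply/negP => Hij.
  have Hjm := div_le Hto Hj.
  have Hij' := ord_le Hord Hij.
  have : lt m m; last by rewrite (negbTE (irr m)).
  case: Hjm => [Ejm|Ljm]; case: Hij' => [Eij|Lij].
  - by rewrite {2}Ejm -Eij.
  - by rewrite {2}Ejm; apply: tr Hmi Lij.
  - by rewrite -Eij in Ljm; apply: tr Hmi Ljm.
  - by apply: tr Hmi (tr _ _ _ Lij Ljm).
set u := mdiff (lms j) m in Hum.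
set c := mcoef f m.
set f' := pcomb 1 f (-c) (pshift u (g j)).
have Hv : vanishes S f'.
  by move=> x Hx; rewrite peval_comb peval_shift Hf // (Hgv j x Hx) !mulr0 addr0.
have -> : peval f h = peval f' h.
  by rewrite peval_comb peval_shift Hlow // !mulr0 addr0 mul1r.
apply: (IH m HmM (or_intror Hmi) f' Hv) => m' /=.
case: (eqVneq m' m) => [->|Hne].
  have Hsh : sh_coef u (g j) m = 1 by rewrite -{1}Hum sh_coef_mul Hg1.
  by rewrite Hsh mulr1 mul1r subrr eqxx.
case: (eqVneq (mcoef f m') 0) => [Hf0|Hf0]; last by move=> _; exact: Hm.2.
rewrite Hf0 mulr0 add0r mulf_eq0 negb_or => /andP[_ Hs].
rewrite -Hum; apply: shift_lm Hto (Hglm j) Hs _; by rewrite Hum.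
Qed.

Theorem mainTheorem4 (F : fieldType) (n : nat) (lt : mon n -> mon n -> bool)
    (S : seq (point F n)) (h : point F n)
    (s : nat) (g : 'I_s -> mpoly F n) (lms : 'I_s -> mon n) (i : 'I_s) :
  term_order lt ->
  h \notin S ->
  reduced_groebner lt S g lms ->
  (forall j k : 'I_s, (j < k)%N -> lt (lms j) (lms k)) ->
  peval (g i) h != 0 ->
  (forall j : 'I_s, (j < i)%N -> peval (g j) h = 0) ->
  forall m : mon n, Sm lt (h :: S) m <-> (Sm lt S m \/ m = lms i).
Proof.
move=> Hto _ Hgb Hord HGi Hlow m.
have Hto' := Hto; case: Hto' => irr tr tot mul wf.
have Hgb' := Hgb; case: Hgb' => Hgv Hglm Hgdiv Hg1 _.
split.
  move=> HT; apply: NNPP => Hn.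
  have Hmi : m <> lms i by move=> E; apply: Hn; right.
  have HS : ~ Sm lt S m by move=> E; apply: Hn; left.
  apply: HS => - [p [Hp [Hex Hlm]]].
  have [j Hj] := Hgdiv p m Hp Hlm.
  have Hum : monmul (mdiff (lms j) m) (lms j) = m by rewrite monmulC mdiffK.
  set u := mdiff (lms j) m in Hum.
  set P := peval (pshift u (g j)) h.
  set c := P / peval (g i) h.
  set f := pcomb 1 (pshift u (g j)) (-c) (g i).
  have Hc : forall m', c * mcoef (g i) m' != 0 -> lt m' m.
    move=> m'; rewrite mulf_eq0 negb_or => /andP[Hc Hg].
    have Hji : ~~ (j < i)%N.
      apply: contra Hc => Hji; by rewrite /c /P peval_shift Hlow // mulr0 mul0r.
    rewrite -leqNgt in Hji.
    have Him : lt (lms i) m.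
      case: (ord_le Hord Hji) => [E|L]; case: (div_le Hto Hj) => [E'|L'].
      - by exfalso; apply: Hmi; rewrite E' E.
      - by rewrite E.
      - by rewrite E'.
      - exact: tr L L'.
    case: (eqVneq m' (lms i)) => [->//|Hne].
    exact: tr ((Hglm i).2 m' Hg Hne) Him.
  have Hcm : c * mcoef (g i) m = 0.
    by case: (eqVneq (c * mcoef (g i) m) 0) => // /Hc; rewrite (negbTE (irr m)).
  have Hsh : sh_coef u (g j) m = 1 by rewrite -{1}Hum sh_coef_mul Hg1.
  apply: HT; exists f; split; [|split].
  - move=> x; rewrite inE => /orP[/eqP ->|Hx].
      by rewrite peval_comb mul1r -/P mulNr divfK // subrr.
    by rewrite peval_comb peval_shift !Hgv // !mulr0 addr0.
  - by exists m; rewrite /= Hsh mulNr Hcm oppr0 addr0 mul1r oner_neq0.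
  split; first by rewrite /= Hsh mulNr Hcm oppr0 addr0 mul1r oner_neq0.
  move=> m' /= Hnz Hne.
  case: (eqVneq (sh_coef u (g j) m') 0) => [Hs0|Hs0].
    move: Hnz; rewrite Hs0 mulr0 add0r mulNr oppr_eq0; exact: Hc.
  rewrite -Hum; apply: shift_lm Hto (Hglm j) Hs0 _; by rewrite Hum.
case=> [HS|->].
  move=> [p [Hp [Hex Hlm]]]; apply: HS; exists p; split => // x Hx.
  by apply: Hp; rewrite inE Hx orbT.
move=> [p [Hp [Hex Hlm]]].
set c := mcoef p (lms i).
set f := pcomb 1 p (-c) (g i).
have Hv : vanishes S f.
  by move=> x Hx; rewrite peval_comb Hp ?inE ?Hx ?orbT // Hgv // !mulr0 addr0.
have := key Hto Hgb Hord Hlow Hv.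
rewrite peval_comb (Hp h (mem_head _ _)) mulr0 add0r.
have Hlt : forall m', mcoef f m' != 0 -> lt m' (lms i).
  move=> m' /=; case: (eqVneq m' (lms i)) => [->|Hne].
    by rewrite Hg1 mulr1 mul1r subrr eqxx.
  case: (eqVneq (mcoef p m') 0) => [Hp0|Hp0]; last by move=> _; exact: Hlm.2.
  rewrite Hp0 mulr0 add0r mulf_eq0 negb_or => /andP[_ Hg].
  exact: (Hglm i).2.
move=> /(_ Hlt) /eqP; rewrite mulf_eq0 oppr_eq0 (negbTE HGi) orbF.
by rewrite (negbTE Hlm.1).
Qed.
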